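(* For all integers $n\ge 3$ and $m\ge 1$, $\alpha_{n,m}\ge\alpha_{n+1,m}$.
   Context: Let $\mathbb{K}$ be a field. For $n\ge 3$, $Q_n$ is the cycle graph on vertices $1,\dots,n$ (edges $\{i,i+1\}$ for $1\le i\le n-1$ and $\{n,1\}$); $B_n$ is the simplicial complex on $\{0,\dots,n+1\}$ whose facets are $\{0,i,j\}$ and $\{n+1,i,j\}$ for each edge $\{i,j\}$ of $Q_n$ (boundary of the bipyramid over the $n$-gon); $I_{B_n}\subset R=\mathbb{K}[x_0,\dots,x_{n+1}]$ is its Stanley-Reisner ideal, generated by $\prod_{i\in\tau}x_i$ over non-faces $\tau$. For a homogeneous ideal $I$, $I^{(m)}=R\cap\bigcap_{P\in\mathrm{Ass}(I)}I^mR_P$, $\alpha(I)=\min\{t:I_t\ne0\}$, and $\alpha_{n,m}:=\alpha(I_{B_n}^{(m)})$. *)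

(* Defs.v *)
From HB Require Import structures.
From mathcomp Require Import all_boot all_order all_algebra.
From mathcomp Require Import mpoly.
From Stdlib Require Import ClassicalEpsilon.
Set Implicit Arguments. Unset Strict Implicit. Unset Printing Implicit Defensive.
Import GRing.Theory.
Local Open Scope ring_scope.

Section Defs.
Variable K : fieldType.
Variable N : nat.
Local Notation R := {mpoly K[N]}.

Definition rset := R -> Prop.

Definition is_ideal (I : rset) : Prop :=
  [/\ I 0, (forall a b, I a -> I b -> I (a + b)) & (forall r a, I a -> I (r * a))].

Definition is_prime_ideal (P : rset) : Prop :=
  [/\ is_ideal P, ~ P 1 & (forall a b, P (a * b) -> P a \/ P b)].

Definition gen_ideal (S : rset) : rset :=
  fun f => exists (k : nat) (r s : 'I_k -> R),
    (forall j, S (s j)) /\ f = \sum_(j < k) r j * s j.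

Fixpoint ideal_pow (I : rset) (m : nat) : rset :=
  match m with
  | 0%N => fun _ => True
  | m'.+1 => gen_ideal (fun f => exists a b, ideal_pow I m' a /\ I b /\ f = a * b)
  end.

Definition is_associated_prime (I P : rset) : Prop :=
  is_prime_ideal P /\ exists f : R, forall g, P g <-> I (g * f).

(* I^m R_P contracted to R: f in R with f = g/s, g in I^m, s notin P.
   (R is a domain, so f = g/s in R_P iff s f = g.) *)
Definition contract_local_pow (I P : rset) (m : nat) : rset :=
  fun f => exists s g, ~ P s /\ ideal_pow I m g /\ s * f = g.

(* symbolic power I^(m) = R ∩ ⋂_{P ∈ Ass(I)} I^m R_P *)
Definition symbolic_power (I : rset) (m : nat) : rset :=
  fun f => forall P, is_associated_prime I P -> contract_local_pow I P m f.

Definition homog_deg (t : nat) (p : R) : bool :=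
  all (fun mm => mdeg mm == t) (msupp p).

Definition deg_nonzero (I : rset) (t : nat) : Prop :=
  exists f, I f /\ f != 0 /\ homog_deg t f.

Definition deg_nonzerob (I : rset) (t : nat) : bool :=
  if excluded_middle_informative (deg_nonzero I t) then true else false.

(* alpha(I) = min { t : I_t <> 0 }  (0 by convention if no such t) *)
Definition alpha (I : rset) : nat :=
  match excluded_middle_informative (exists t, deg_nonzerob I t) with
  | left h => ex_minn h
  | right _ => 0%N
  end.
End Defs.

(* B_n: vertices 0..n+1 of type 'I_(n.+2); cycle Q_n on 1..n *)
Definition cycle_edge (n : nat) (i j : nat) : bool :=
  [&& 1 <= i, i < n & j == i.+1]%N || ((i == n) && (j == 1%N)).

Definition Bn_facet (n : nat) (F : {set 'I_(n.+2)}) : bool :=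
  [exists i : 'I_(n.+2), exists j : 'I_(n.+2),
     cycle_edge n i j &&
     ((F == [set ord0; i; j]) || (F == [set ord_max; i; j]))].

Definition Bn_face (n : nat) (tau : {set 'I_(n.+2)}) : bool :=
  [exists F, @Bn_facet n F && (tau \subset F)].

Definition SR_ideal (K : fieldType) (n : nat) : rset K n.+2 :=
  gen_ideal (fun f => exists tau : {set 'I_(n.+2)},
     ~~ @Bn_face n tau /\ f = \prod_(i in tau) 'X_i).

Definition alpha_nm (K : fieldType) (n m : nat) : nat :=
  alpha (symbolic_power (@SR_ideal K n) m).

(* Main.v *)
From HB Require Import structures.
Require Import Defs.
From mathcomp Require Import all_boot all_algebra mpoly zify.
From Stdlib Require Import ClassicalEpsilon.
Set Implicit Arguments. Unset Strict Implicit. Unset Printing Implicit Defensive.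
Import GRing.Theory.
Local Open Scope ring_scope.

Section Gen.
Variable K : fieldType.
Variable N : nat.
Local Notation R := {mpoly K[N]}.
Implicit Types (S : rset K N).

Lemma gen_ideal0 S : gen_ideal S 0.
Proof. exists 0%N, (fun _ => 0), (fun _ => 0); split; [by case|by rewrite big_ord0]. Qed.

Lemma gen_idealD S a b : gen_ideal S a -> gen_ideal S b -> gen_ideal S (a + b).
Proof.
move=> [k1 [r1 [s1 [Hs1 ->]]]] [k2 [r2 [s2 [Hs2 ->]]]].
exists (k1 + k2)%N, (fun j => match split j with inl x => r1 x | inr y => r2 y end),
  (fun j => match split j with inl x => s1 x | inr y => s2 y end); split.
  by move=> j; case: (split j).
rewrite big_split_ord /=; congr (_ + _); apply: eq_bigr => j _.
  by have /= -> := @unsplitK k1 k2 (inl j).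
by have /= -> := @unsplitK k1 k2 (inr j).
Qed.

Lemma gen_idealM S r a : gen_ideal S a -> gen_ideal S (r * a).
Proof.
move=> [k [r1 [s1 [Hs1 ->]]]]; exists k, (fun j => r * r1 j), s1; split => //.
rewrite big_distrr; apply: eq_bigr => j _; exact: mulrA.
Qed.

Lemma gen_ideal_base S s : S s -> gen_ideal S s.
Proof.
move=> Hs; exists 1%N, (fun _ => 1), (fun _ => s); split => //.
by rewrite big_ord1 mul1r.
Qed.

Lemma gen_ideal_ind S (P : R -> Prop) :
  P 0 -> (forall a b, P a -> P b -> P (a + b)) ->
  (forall r s, S s -> P (r * s)) -> forall h, gen_ideal S h -> P h.
Proof.
move=> P0 PD PM h [k [r [s [Hs ->]]]].
by elim/big_ind: _ => // j _; apply: PM.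
Qed.

End Gen.


Section Face.
Variable K : fieldType.
Variable N : nat.
Local Notation R := {mpoly K[N]}.
Variable face : {set 'I_N} -> bool.
Hypothesis face_down : forall A B : {set 'I_N}, B \subset A -> face A -> face B.

Definition SRI : rset K N :=
  gen_ideal (fun f => exists tau : {set 'I_N}, ~~ face tau /\ f = \prod_(i in tau) 'X_i).
Definition supp (b : 'X_{1..N}) : {set 'I_N} := [set i | (0 < b i)%N].
Definition ind (A : {set 'I_N}) : 'X_{1..N} := [multinom (i \in A : nat) | i < N].

Lemma indE (A : {set 'I_N}) i : ind A i = (i \in A).
Proof. by rewrite mnmE. Qed.

Lemma prod_ind (A : {set 'I_N}) : \prod_(i in A) 'X_i = 'X_[ind A] :> R.
Proof.
rewrite mpolyXE_id big_mkcond /=; apply: eq_bigr => i _.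
by rewrite indE; case: (i \in A); rewrite ?expr1 ?expr0.
Qed.

Lemma SRI_NF h : SRI h -> forall b, b \in msupp h -> ~~ face (supp b).
Proof.
move: h; apply: (@gen_ideal_ind _ _ _ (fun h => forall b, b \in msupp h -> ~~ face (supp b))).
- by move=> b; rewrite msupp0.
- move=> a c Ha Hc b /msuppD_le; rewrite mem_cat => /orP [/Ha|/Hc] //.
- move=> r s [tau [Htau ->]] b; rewrite prod_ind (perm_mem (msuppMX _ _)).
  case/mapP => b' _ ->; apply: contra Htau; apply: face_down.
  apply/subsetP => i Hi; rewrite inE mnmDE indE Hi; done.
Qed.

Lemma NF_SRI h : (forall b, b \in msupp h -> ~~ face (supp b)) -> SRI h.
Proof.
move=> H; rewrite (mpolyE h) big_seq; apply: big_ind.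
- exact: gen_ideal0.
- exact: gen_idealD.
move=> b Hb.
have -> : b = (b - ind (supp b) + ind (supp b))%MM.
  apply/mnmP => i; rewrite mnmDE mnmBE indE inE; case: (ltnP 0 (b i)) => //.
  - by move=> Hi; rewrite addn1 subn1 prednK.
  - by rewrite leqn0 => /eqP ->.
rewrite mpolyXD -mul_mpolyC mulrA; apply: gen_idealM; apply: gen_ideal_base.
exists (supp b); split; last by rewrite prod_ind.
apply: contra (H _ Hb); apply: face_down; apply/subsetP => i.
by [].
Qed.
End Face.


Section Theta.
Variable K : fieldType.
Variable N : nat.
Local Notation R := {mpoly K[N]}.

Definition mass (F : {set 'I_N}) (b : 'X_{1..N}) : nat := (\sum_(i < N | i \notin F) b i)%N.

Definition gv (F : {set 'I_N}) (i : 'I_N) : {poly R} :=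
  if i \in F then ('X_i)%:P else ('X_i)%:P * 'X.

Definition cst : {rmorphism K -> {poly R}} := (polyC \o mpolyC N (R:=K))%FUN.

Definition Th_def (F : {set 'I_N}) (h : R) : {poly R} := mmap cst (gv F) h.
Fact Th_key : unit. Proof. exact: tt. Qed.
Definition Th := locked_with Th_key Th_def.
Lemma ThU : Th = Th_def. Proof. by rewrite /Th unlock. Qed.

Lemma ThM F a b : Th F (a * b) = Th F a * Th F b.
Proof. by rewrite ThU /Th_def rmorphM. Qed.
Lemma ThD F a b : Th F (a + b) = Th F a + Th F b.
Proof. by rewrite ThU /Th_def rmorphD. Qed.
Lemma Th0 F : Th F 0 = 0.
Proof. by rewrite ThU /Th_def rmorph0. Qed.
Lemma Th1 F : Th F 1 = 1.
Proof. by rewrite ThU /Th_def rmorph1. Qed.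

Lemma mmap1_gv F b : mmap1 (gv F) b = ('X_[b])%:P * 'X^(mass F b).
Proof.
rewrite /mmap1 /mass mpolyXE_id rmorph_prod /= -prodrXr [X in _ * X]big_mkcond /=.
rewrite -big_split /=; apply: eq_bigr => i _; rewrite /gv.
case: (i \in F) => /=; first by rewrite mulr1 rmorphXn.
by rewrite exprMn rmorphXn.
Qed.

Lemma ThE F h j b : ((Th F h)`_j)@_b = if mass F b == j then h@_b else 0.
Proof.
rewrite ThU /Th_def /mmap coef_sum raddf_sum /=.
under eq_bigr => b' _ do rewrite mmap1_gv mulrA -rmorphM /= coefCM coefXn mulr_natr mcoeffMn
   mul_mpolyC mcoeffZ mcoeffX.
case: (boolP (b \in msupp h)) => Hb.
  rewrite (bigD1_seq b) //= ?msupp_uniq // eqxx mulr1 big1 ?addr0.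
    by rewrite eq_sym; case: eqP.
  move=> b' Hb'; case: eqP => [E|_]; last by rewrite mulr0 mul0rn.
  by rewrite E eqxx in Hb'.
rewrite memN_msupp_eq0 // if_same big_seq big1 // => b' Hb'.
have -> : (b' == b) = false by apply/negbTE; apply: contraNneq Hb => <-.
by rewrite mulr0 mul0rn.
Qed.

Definition W F k (h : R) := forall j, (j < k)%N -> (Th F h)`_j = 0.

Lemma Wchar F k h : W F k h <-> (forall b, b \in msupp h -> (k <= mass F b)%N).
Proof.
split.
  move=> HW b Hb; rewrite leqNgt; apply/negP => Hlt.
  have := ThE F h (mass F b) b; rewrite eqxx HW // mcoeff0 => /esym/eqP E.
  by move: Hb; rewrite mcoeff_msupp; move/eqP: E => ->; rewrite eqxx.
move=> H j Hj; apply/mpolyP => b; rewrite ThE mcoeff0; case: eqP => // Hm.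
case: (boolP (b \in msupp h)) => Hb; last by rewrite memN_msupp_eq0.
by have := H _ Hb; rewrite Hm leqNgt Hj.
Qed.

Lemma W0 F k : W F k 0.
Proof. by move=> j _; rewrite Th0 coef0. Qed.
Lemma WD F k a b : W F k a -> W F k b -> W F k (a + b).
Proof. by move=> Ha Hb j Hj; rewrite ThD coefD (Ha j Hj) (Hb j Hj) addr0. Qed.
Lemma WM F k r a : W F k a -> W F k (r * a).
Proof.
move=> Ha j Hj; rewrite ThM coefM big1 // => i _; rewrite (Ha (j - i)%N) ?mulr0 //.
by apply: leq_ltn_trans Hj; apply: leq_subr.
Qed.
Lemma Wprod F k a b : W F k a -> W F 1 b -> W F k.+1 (a * b).
Proof.
move=> Ha Hb j Hj; rewrite ThM coefM big1 // => i _.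
case: (ltnP i k) => Hik; first by rewrite (Ha i Hik) mul0r.
have Hij : (j - i = 0)%N.
  apply/eqP; rewrite subn_eq0; apply: leq_trans (ltnSE Hj) Hik.
by rewrite Hij (Hb 0%N) ?mulr0.
Qed.

Lemma Wcancel (p q : {poly R}) k : p`_0 != 0 ->
  (forall j, (j < k)%N -> (p * q)`_j = 0) -> forall j, (j < k)%N -> q`_j = 0.
Proof.
move=> Hp H; elim/ltn_ind => j IH Hj.
have := H j Hj; rewrite coefMr big_ord_recr /= subnn big1 ?add0r.
  by move/eqP; rewrite mulf_eq0 (negbTE Hp) /= => /eqP.
move=> i _; have Hi : (i < j)%N := ltn_ord i.
by rewrite IH ?mulr0 // (ltn_trans Hi Hj).
Qed.
End Theta.


Section Main.
Variable K : fieldType.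
Variable N : nat.
Local Notation R := {mpoly K[N]}.
Variable face : {set 'I_N} -> bool.
Hypothesis face_down : forall A B : {set 'I_N}, B \subset A -> face A -> face B.

Definition isfacet (F : {set 'I_N}) := face F /\ forall j, j \notin F -> ~~ face (j |: F).

Lemma facet_ext (A : {set 'I_N}) : face A -> exists F, isfacet F /\ A \subset F.
Proof.
move=> HA.
have [F /andP [HF HAF] Hmax] := @arg_maxnP _ A (fun F : {set 'I_N} => face F && (A \subset F))
  (fun F => #|F|) (introT andP (conj HA (subxx A))).
exists F; split => //; split => // j Hj; apply/negP => Hj'.
have := Hmax (j |: F); rewrite Hj' (subset_trans HAF (subsetUr _ _)) => /(_ isT).
by rewrite cardsU1 Hj /= add1n ltnn.
Qed.

Lemma mass_anti (A B : {set 'I_N}) b : A \subset B -> (mass B b <= mass A b)%N.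
Proof.
move=> HAB; rewrite /mass [X in (X <= _)%N]big_mkcond [X in (_ <= X)%N]big_mkcond /=.
apply: leq_sum => i _; case: (boolP (i \in B)) => HiB /=.
  by case: (i \notin A).
by rewrite (contra (subsetP HAB i) HiB).
Qed.

Lemma mass_pos (F : {set 'I_N}) b : (0 < mass F b)%N -> exists2 j, j \notin F & (0 < b j)%N.
Proof.
move=> H; apply/exists_inP; apply: contraLR H; rewrite negb_exists_in => /forall_inP H.
rewrite lt0n negbK /mass; apply/eqP; apply: big1 => i Hi.
by have := H i Hi; rewrite lt0n negbK => /eqP.
Qed.

Definition Qp (F : {set 'I_N}) : rset K N := fun h => (Th F h)`_0 = 0.

Lemma Qp_W F h : Qp F h <-> W F 1 h.
Proof.
split; first by move=> H [|j] // _.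
by move=> H; apply: H.
Qed.

Lemma Q_assoc F : isfacet F -> is_associated_prime (SRI face) (Qp F).
Proof.
move=> [HF Hmax]; split.
  split.
  - split.
    + by rewrite /Qp Th0 coef0.
    + by move=> a b; rewrite /Qp ThD coefD => -> ->; rewrite addr0.
    + by move=> r a; rewrite /Qp ThM coef0M => ->; rewrite mulr0.
  - by rewrite /Qp Th1 coef1 /=; apply/eqP; exact: oner_neq0.
  - by move=> a b; rewrite /Qp ThM coef0M => /eqP; rewrite mulf_eq0 => /orP [] /eqP; [left|right].
exists 'X_[ind F] => h; rewrite Qp_W Wchar; split.
  move=> H; apply: (NF_SRI face_down) => b; rewrite (perm_mem (msuppMX _ _)) => /mapP [b' Hb' ->].
  have [j Hj Hbj] := mass_pos (H _ Hb').
  apply: contra (Hmax _ Hj); apply: face_down; apply/subsetP => i.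
  rewrite !inE mnmDE indE => /orP [/eqP ->|->]; first by rewrite addn_gt0 Hbj orbT.
  by rewrite add1n.
move=> H b Hb; rewrite lt0n; apply/negP => /eqP Hm.
have := SRI_NF face_down H (b := (ind F + b)%MM).
rewrite (perm_mem (msuppMX _ _)) map_f // => /(_ isT); apply/negP/negPn.
apply: face_down HF; apply/subsetP => i; rewrite inE mnmDE indE.
case: (boolP (i \in F)) => // HiF /=; rewrite add0n.
move: Hm; rewrite /mass => /eqP; rewrite sum_nat_eq0 => /forall_inP /(_ i HiF) /eqP ->.
done.
Qed.

Lemma pow_W F k (h : R) : isfacet F -> ideal_pow (SRI face) k h -> W F k h.
Proof.
move=> [HF _]; elim: k h => [|k IH] h; first by move=> _ j.
move: h; apply: gen_ideal_ind.
- exact: W0.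
- exact: WD.
move=> r s [a [b [Ha [Hb ->]]]]; apply: WM; apply: Wprod; first exact: IH.
move: b Hb; apply: gen_ideal_ind; [exact: W0|exact: WD|].
move=> r' s' [tau [Htau ->]]; apply: WM; rewrite prod_ind Wchar msuppX => b.
rewrite mem_seq1 => /eqP ->; rewrite lt0n; apply/negP => /eqP Hm.
move: Htau; apply/negP/negPn; apply: face_down HF; apply/subsetP => i Hi.
apply: contraT => HiF; move: Hm; rewrite /mass => /eqP; rewrite sum_nat_eq0.
by move=> /forall_inP /(_ i HiF); rewrite indE Hi.
Qed.

Lemma sym_mass F m (f : R) : isfacet F -> symbolic_power (SRI face) m f ->
  forall b, b \in msupp f -> (m <= mass F b)%N.
Proof.
move=> HF Hf; have [s [g [Hs [Hg Hsf]]]] := Hf _ (Q_assoc HF).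
apply/Wchar => j Hj; apply: (@Wcancel _ _ (Th F s) (Th F f) m) => //.
  by apply/eqP.
by move=> i Hi; rewrite -ThM Hsf; apply: pow_W HF Hg _ Hi.
Qed.
End Main.


Section Part1.
Variable K : fieldType.
Variable N : nat.
Local Notation R := {mpoly K[N]}.
Variable face : {set 'I_N} -> bool.
Hypothesis face_down : forall A B : {set 'I_N}, B \subset A -> face A -> face B.

Lemma mass_split (F : {set 'I_N}) (e : 'X_{1..N}) j : j \notin F -> (0 < e j)%N ->
  e = ((e - U_(j)) + U_(j))%MM /\ mass F e = (mass F (e - U_(j))%MM).+1.
Proof.
move=> Hj He.
have Ee : e = ((e - U_(j)) + U_(j))%MM.
  apply/mnmP => i; rewrite mnmDE mnmBE mnm1E; case: eqP => [<-|_].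
    by rewrite addn1 subn1 prednK.
  by rewrite subn0 addn0.
split => //; rewrite {1}Ee /mass (bigD1 j) //= [in RHS](bigD1 j) //= mnmDE mnm1E eqxx addn1 addSn.
do 2 f_equal; apply: eq_bigr => i /andP [_ Hij]; rewrite mnmDE mnm1E.
by rewrite eq_sym (negbTE Hij) addn0.
Qed.

Lemma powX (F : {set 'I_N}) : isfacet face F -> forall k e, (k <= mass F e)%N ->
  ideal_pow (SRI (K:=K) face) k 'X_[(ind F *+ k + e)%MM].
Proof.
move=> [HF Hmax]; elim=> [|k IH] e He //=.
have [j Hj Hej] := mass_pos (leq_ltn_trans (leq0n k) He).
have [Ee Em] := mass_split Hj Hej.
have -> : (ind F *+ k.+1 + e = (ind F *+ k + (e - U_(j))) + (ind F + U_(j)))%MM.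
  apply/mnmP => i; rewrite {1}Ee !mnmDE !mulmnE mulnS; lia.
rewrite mpolyXD; apply: gen_ideal_base; do 2 eexists; split; last split; last by [].
  by apply: IH; rewrite -ltnS -Em.
apply: gen_ideal_base; exists (j |: F); split; first exact: Hmax.
rewrite prod_ind; congr 'X_[_]; apply/mnmP => i.
rewrite mnmDE !indE mnm1E !inE eq_sym; case: (boolP (i \in F)) => HiF;
  case: (boolP (i == j)) => // /eqP Eij.
by rewrite -Eij HiF in Hj.
Qed.

Lemma mono_symp m b : (forall F, isfacet face F -> (m <= mass F b)%N) ->
  symbolic_power (SRI (K:=K) face) m 'X_[b].
Proof.
move=> Hb P [[_ P1 _] [g Hg]].
have Hg1 : ~ SRI face g by move=> Hsg; apply: P1; apply/(Hg 1); rewrite mul1r.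
have [b0 Hb0 Hf0] : exists2 b0, b0 \in msupp g & face (supp b0).
  case: (boolP (has (fun b0 => face (supp b0)) (msupp g))) => [/hasP [x Hx Hfx]|/hasPn H].
    by exists x.
  by exfalso; apply: Hg1; apply: (NF_SRI face_down).
have [F [HF HsF]] := facet_ext Hf0.
exists 'X_[(ind F *+ m)%MM], 'X_[(ind F *+ m + b)%MM]; split; last split.
- move/Hg => Hin; have := SRI_NF face_down Hin (b := (ind F *+ m + b0)%MM).
  rewrite mulrC (perm_mem (msuppMX _ _)) map_f // => /(_ isT); apply/negP/negPn.
  apply: face_down (proj1 HF); apply/subsetP => i; rewrite inE mnmDE mulmnE indE.
  case: (boolP (i \in F)) => // HiF /=; rewrite mul0n add0n => Hi.
  by rewrite (subsetP HsF i) ?inE in HiF.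
- by apply: powX => //; apply: Hb.
- by rewrite mpolyXD.
Qed.
End Part1.


Lemma Bn_face_down n : forall A B : {set 'I_(n.+2)}, B \subset A -> @Bn_face n A -> @Bn_face n B.
Proof.
move=> A B HBA /existsP [F /andP [HF HAF]]; apply/existsP; exists F.
by rewrite HF (subset_trans HBA HAF).
Qed.

Lemma mass_ge_term N (F : {set 'I_N}) (b : 'X_{1..N}) x : x \notin F -> (b x <= mass F b)%N.
Proof. by move=> Hx; rewrite /mass (bigD1 x) //= leq_addr. Qed.

Lemma deg_nonzerobP K N (I : rset K N) t : deg_nonzerob I t = true <-> deg_nonzero I t.
Proof. by rewrite /deg_nonzerob; case: excluded_middle_informative. Qed.

Lemma alpha_le K1 K2 N1 N2 (I1 : rset K1 N1) (I2 : rset K2 N2) :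
  (exists t, deg_nonzero I1 t) -> (forall t, deg_nonzero I1 t -> deg_nonzero I2 t) ->
  (alpha I2 <= alpha I1)%N.
Proof.
move=> [t0 Ht0] H12.
have e1 : exists t, deg_nonzerob I1 t by exists t0; apply/deg_nonzerobP.
rewrite /alpha; destruct (excluded_middle_informative (exists t, deg_nonzerob I1 t)) as [h1|n1];
  last by [].
case: ex_minnP => t1 /deg_nonzerobP Ht1 _.
have e2 : exists t, deg_nonzerob I2 t by exists t1; apply/deg_nonzerobP; apply: H12.
destruct (excluded_middle_informative (exists t, deg_nonzerob I2 t)) as [h2|n2]; last by [].
case: ex_minnP => t2 _ Hmin; apply: Hmin; apply/deg_nonzerobP; exact: H12.
Qed.

Lemma cycle_bound n i j : (1 <= n)%N -> cycle_edge n i j -> [/\ (1 <= i <= n)%N & (1 <= j <= n)%N].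
Proof. rewrite /cycle_edge; lia. Qed.

Lemma Bn_facet_apex n (F : {set 'I_(n.+2)}) : (1 <= n)%N -> @Bn_facet n F ->
  exists x, [/\ x \notin F & (x == ord0) || (x == ord_max)].
Proof.
move=> Hn /existsP [i /existsP [j /andP [Hc /orP [] /eqP ->]]];
  have [Hi Hj] := cycle_bound Hn Hc.
- exists ord_max; rewrite !inE -!val_eqE /=; split; lia.
- exists ord0; rewrite !inE -!val_eqE /=; split; lia.
Qed.

Section Exist.
Variable K : fieldType.
Variable n m : nat.
Hypothesis Hn : (1 <= n)%N.

Definition b0 : 'X_{1..n.+2} := ((U_(ord0) + U_(ord_max)) *+ m)%MM.

Lemma b0_ok : forall G, isfacet (@Bn_face n) G -> (m <= mass G b0)%N.
Proof.
move=> G [/existsP [F /andP [HF HGF]] _].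
apply: leq_trans (mass_anti _ HGF).
have [x [Hx Hx0]] := Bn_facet_apex Hn HF.
apply: leq_trans (mass_ge_term _ Hx).
rewrite /b0 mulmnE mnmDE !mnm1E.
move: Hx0; rewrite -!val_eqE /= => Hx0; lia.
Qed.
End Exist.


Section Transfer.
Variable n : nat.
Hypothesis Hn : (3 <= n)%N.

Definition iotaB (v : 'I_(n.+2)) : 'I_(n.+3) := inord (if val v == n.+1 then n.+2 else val v).

Lemma iotaBE v : nat_of_ord (iotaB v) = if val v == n.+1 then n.+2 else val v.
Proof. rewrite /iotaB inordK //; have := ltn_ord v; case: ifP => _ /=; lia. Qed.

Definition cmap (b : 'X_{1..n.+2}) : 'X_{1..n.+3} :=
  [multinom (\sum_(v < n.+2 | iotaB v == w) b v)%N | w < n.+3].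

Lemma mass_c (F : {set 'I_(n.+3)}) b :
  mass F (cmap b) = (\sum_(v < n.+2 | iotaB v \notin F) b v)%N.
Proof.
rewrite (partition_big iotaB (fun w => w \notin F)) //=; apply: eq_bigr => w Hw.
rewrite mnmE; apply: eq_bigl => v; case: eqP => [->|_]; by rewrite ?Hw ?andbF.
Qed.

Lemma mdeg_c b : mdeg (cmap b) = mdeg b.
Proof.
rewrite !mdegE (partition_big iotaB predT) //=; apply: eq_bigr => w _.
by rewrite mnmE.
Qed.

Lemma mass_le (H : {set 'I_(n.+2)}) (F : {set 'I_(n.+3)}) b :
  (forall v, iotaB v \in F -> v \in H) -> (mass H b <= mass F (cmap b))%N.
Proof.
move=> HFH; rewrite mass_c /mass big_mkcond [X in (_ <= X)%N]big_mkcond /=.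
apply: leq_sum => v _; case: (boolP (v \in H)) => //= HvH.
by rewrite ifT //; apply: contra HvH; apply: HFH.
Qed.

Lemma core (F : {set 'I_(n.+3)}) : @Bn_facet n.+1 F ->
  exists H : {set 'I_(n.+2)}, @Bn_facet n H /\ (forall v, iotaB v \in F -> v \in H).
Proof.
move=> /existsP [i /existsP [j /andP [Hc HF]]].
have Hi := ltn_ord i; have Hj := ltn_ord j.
pose i' : 'I_(n.+2) := inord (if (i < n)%N then val i else n).
pose j' : 'I_(n.+2) := inord (if (i < n)%N then (val i).+1 else 1%N).
have Ei : nat_of_ord i' = if (i < n)%N then val i else n.
  rewrite /i' inordK //; case: ifP => Hif /=; lia.
have Ej : nat_of_ord j' = if (i < n)%N then (val i).+1 else 1%N.
  rewrite /j' inordK //; case: ifP => Hif /=; lia.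
have Hc' : cycle_edge n i' j'.
  move: Hc; rewrite /cycle_edge Ei Ej; case: ifP => Hif /=; lia.
case/orP: HF => /eqP ->.
- exists [set ord0; i'; j']; split.
    by apply/existsP; exists i'; apply/existsP; exists j'; rewrite Hc' eqxx.
  move=> v; rewrite !inE -!val_eqE /= iotaBE Ei Ej.
  have := ltn_ord v; move: Hc; rewrite /cycle_edge.
  case: (boolP (nat_of_ord v == n.+1)) => Hv /=; case: (boolP (nat_of_ord i < n)%N) => Hin /=; lia.
- exists [set ord_max; i'; j']; split.
    by apply/existsP; exists i'; apply/existsP; exists j'; rewrite Hc' /= eqxx ?orbT.
  move=> v; rewrite !inE -!val_eqE /= iotaBE Ei Ej.
  have := ltn_ord v; move: Hc; rewrite /cycle_edge.
  case: (boolP (nat_of_ord v == n.+1)) => Hv /=; case: (boolP (nat_of_ord i < n)%N) => Hin /=; lia.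
Qed.

Lemma transfer m b : (forall G, isfacet (@Bn_face n) G -> (m <= mass G b)%N) ->
  forall F, isfacet (@Bn_face n.+1) F -> (m <= mass F (cmap b))%N.
Proof.
move=> Hb F [/existsP [F' /andP [HF' HFF']] _].
apply: leq_trans (mass_anti _ HFF').
have [H [HH Hcond]] := core HF'.
have HfH : @Bn_face n H by apply/existsP; exists H; rewrite HH subxx.
have [G [HG HHG]] := facet_ext HfH.
apply: leq_trans (Hb _ HG) _; apply: leq_trans (mass_anti _ HHG) _.
exact: mass_le.
Qed.
End Transfer.


Lemma X_nz (K : fieldType) N (b : 'X_{1..N}) : 'X_[b] != 0 :> {mpoly K[N]}.
Proof. by rewrite -msupp_eq0 msuppX. Qed.

Theorem proposition3p13 (K : fieldType) (n m : nat) :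
  (3 <= n)%N -> (1 <= m)%N -> (alpha_nm K n.+1 m <= alpha_nm K n m)%N.
Proof.
move=> Hn Hm; rewrite /alpha_nm; apply: alpha_le.
  exists (mdeg (b0 n m)), 'X_[b0 n m]; split; last split.
  - have H1 := mono_symp (K:=K) (@Bn_face_down n) (b0_ok m (ltnW (ltnW Hn))).
    exact: H1.
  - exact: X_nz.
  - by rewrite /homog_deg msuppX /= eqxx.
move=> t [f [Hf [Hf0 Hh]]].
case E: (msupp f) => [|b s]; first by move: Hf0; rewrite -msupp_eq0 E.
have Hb : b \in msupp f by rewrite E mem_head.
have Hdb : mdeg b = t by move/allP: Hh => /(_ _ Hb) /eqP.
exists 'X_[cmap b]; split; last split.
- apply: (@mono_symp K _ _ (@Bn_face_down n.+1)); apply: transfer => // G HG.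
  exact: (sym_mass (@Bn_face_down n) HG Hf).
- exact: X_nz.
- by rewrite /homog_deg msuppX /= mdeg_c Hdb eqxx.
Qed.
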